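(* Let $\alpha\in(0,1)$, $\sigma=1-\alpha/2$, and let $0=t_0<t_1<\cdots$ be a time mesh with $\tau_j=t_j-t_{j-1}$, $\rho_j=\tau_j/\tau_{j-1}$, such that for every $k\ge2$: $\rho_k>\rho_*$, $\rho_{k+1}>\rho_*$, and if $\rho_k<\eta$ then $\rho_{k+1}\le \rho_k^2(1+\rho_k)/(1-3\rho_k^2(1+\rho_k))$. Let the lower-triangular entries $[\mathbf M]_{k,j}$ be as defined in the context. Then: (Q1) for all $1\le j\le k$, $$[\mathbf M]_{k,j}\ge\frac{\rho_*}{(1+\rho_* )\tau_j}\int_{t_{j-1}}^{\min\{t_j,t_k^*\}}(t_k^*-s)^{-\alpha}\,\mathrm ds;$$ (Q2) for all $2\le j\le k-1$, $$[\mathbf M]_{k,j}-[\mathbf M]_{k,j-1}\ge\frac{\alpha\tau_j}{\tau_j+\tau_{j+1}}\int_0^1(\tau_j+\tau_{j+1}-s\tau_j)(1-s)(t_k^*-t_{j-1}-s\tau_j)^{-\alpha-1}\,\mathrm ds,$$ and for all $k\ge2$, $[\mathbf M]_{k,k}-[\mathbf M]_{k,k-1}\ge\dfrac{\alpha}{2(1-\alpha)(\sigma\tau_k)^\alpha}$; (Q3) if moreover $\rho_k\ge\eta$ for all $k\ge2$, then $\frac{1-\alpha}{\sigma}[\mathbf M]_{k,k}-[\mathbf M]_{k,k-1}\ge0$ for all $k\ge2$.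
   Context: Notation: $t_k^*=t_{k-1}+\sigma\tau_k$. For $k\ge2$ and $1\le j\le k-1$ define $$a_j^k=\int_0^1\frac{-2\tau_j(1-\theta)-\tau_{j+1}}{(\tau_j+\tau_{j+1})\,(t_k^*-t_{j-1}-\theta\tau_j)^\alpha}\,\mathrm d\theta,\qquad c_j^k=\int_0^1\frac{\tau_j^2(2\theta-1)}{\tau_{j+1}(\tau_j+\tau_{j+1})\,(t_k^*-t_{j-1}-\theta\tau_j)^\alpha}\,\mathrm d\theta,$$ and $d_j^k=c_{j-1}^k-a_j^k$ for $2\le j\le k-1$. The entries $[\mathbf M]_{k,j}$, $1\le j\le k$, are: $[\mathbf M]_{1,1}=\frac{\sigma^{1-\alpha}}{(1-\alpha)\tau_1^\alpha}$; for $k\ge2$, $[\mathbf M]_{k,1}=-a_1^k$, $[\mathbf M]_{k,j}=d_j^k$ for $2\le j\le k-1$, and $[\mathbf M]_{k,k}=c_{k-1}^k+\frac{\sigma^{1-\alpha}}{(1-\alpha)\tau_k^\alpha}$. $\rho_*\approx 0.356341$ is the unique positive root of $\rho(1+\rho)=1-3\rho^2(1+\rho)$, and $\eta\approx0.475329$ is the unique positive root of $1-3\rho^2(1+\rho)=0$. *)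

(* Defs.v *)
From Stdlib Require Import Reals Lra.
From Coquelicot Require Import Coquelicot.
Open Scope R_scope.

Definition tau (t : nat -> R) (j : nat) : R := t j - t (j - 1)%nat.
Definition rho (t : nat -> R) (j : nat) : R := tau t j / tau t (j - 1)%nat.
Definition sig (alpha : R) : R := 1 - alpha / 2.
Definition tstar (alpha : R) (t : nat -> R) (k : nat) : R :=
  t (k - 1)%nat + sig alpha * tau t k.

Definition acoef (alpha : R) (t : nat -> R) (k j : nat) : R :=
  RInt (fun th =>
    (- 2 * tau t j * (1 - th) - tau t (j + 1)%nat) /
    ((tau t j + tau t (j + 1)%nat) *
     Rpower (tstar alpha t k - t (j - 1)%nat - th * tau t j) alpha)) 0 1.

Definition ccoef (alpha : R) (t : nat -> R) (k j : nat) : R :=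
  RInt (fun th =>
    (tau t j ^ 2 * (2 * th - 1)) /
    (tau t (j + 1)%nat * (tau t j + tau t (j + 1)%nat) *
     Rpower (tstar alpha t k - t (j - 1)%nat - th * tau t j) alpha)) 0 1.

Definition dcoef (alpha : R) (t : nat -> R) (k j : nat) : R :=
  ccoef alpha t k (j - 1)%nat - acoef alpha t k j.

Definition diag_term (alpha : R) (t : nat -> R) (k : nat) : R :=
  Rpower (sig alpha) (1 - alpha) / ((1 - alpha) * Rpower (tau t k) alpha).

(* [M]_{k,j} for 1 <= j <= k (0 elsewhere, never used) *)
Definition Mentry (alpha : R) (t : nat -> R) (k j : nat) : R :=
  if andb (Nat.leb 1 j) (Nat.leb j k) then
    if Nat.eqb j k then
      (if Nat.eqb k 1 then diag_term alpha t 1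
       else ccoef alpha t k (k - 1)%nat + diag_term alpha t k)
    else if Nat.eqb j 1 then - acoef alpha t k 1
    else dcoef alpha t k j
  else 0.

(* Main.v *)
Require Import Defs.
From Stdlib Require Import Reals.
From Coquelicot Require Import Coquelicot.
From Stdlib Require Import Lra Lia.
Open Scope R_scope.


Lemma rp_pos x c : 0 < Rpower x c.
Proof. unfold Rpower; apply exp_pos. Qed.

Lemma rp_der B h c x : 0 < B - x * h ->
  is_derive (fun y => Rpower (B - y * h) c) x (c * Rpower (B - x*h) (c - 1) * (- h)).
Proof.
  intros Hp.
  assert (H1 : is_derive (fun y => B - y * h) x (- h)).
  { auto_derive; [exact I| ring]. }
  assert (H2 : is_derive (fun z => Rpower z c) (B - x*h) (c * Rpower (B - x*h) (c - 1))).
  { apply is_derive_Reals. apply derivable_pt_lim_power; exact Hp. }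
  pose proof (is_derive_comp (fun z => Rpower z c) (fun y => B - y*h) x _ _ H2 H1) as H.
  simpl in H. replace (c * Rpower (B - x * h) (c - 1) * - h) with (scal (-h) (c * Rpower (B - x * h) (c - 1))).
  exact H. unfold scal; simpl; unfold mult; simpl; ring.
Qed.

Lemma rp_cont B h c x : 0 < B - x * h -> continuous (fun y => Rpower (B - y * h) c) x.
Proof. intros Hp. apply (@ex_derive_continuous R_AbsRing R_NormedModule). eexists. apply rp_der; exact Hp. Qed.

Lemma ln_le_sub1 z : 0 < z -> ln z <= z - 1.
Proof. intros Hz. pose proof (exp_ineq1_le (ln z)). rewrite exp_ln in H; lra. Qed.

Lemma exp_mono x y : x <= y -> exp x <= exp y.
Proof. intros [H|H]. left; apply exp_increasing; auto. subst; lra. Qed.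

Lemma rp_m1 y c : 0 < y -> Rpower y (c - 1) = Rpower y c / y.
Proof. intros Hy. unfold Rminus. rewrite Rpower_plus, Rpower_Ropp, Rpower_1; auto. Qed.

Lemma rp_tan al x y : 0 < al -> 0 < x -> 0 < y ->
  Rpower y (-al) - al * Rpower y (-al-1) * (x - y) <= Rpower x (-al).
Proof.
  intros Ha Hx Hy. rewrite rp_m1 by auto.
  assert (E : Rpower x (-al) = Rpower y (-al) * exp (-al * (ln x - ln y))).
  { unfold Rpower. rewrite <- exp_plus. f_equal. ring. }
  rewrite E. pose proof (exp_ineq1_le (-al * (ln x - ln y))).
  pose proof (ln_le_sub1 (x / y)). rewrite ln_div in H0 by auto.
  specialize (H0 ltac:(apply Rdiv_lt_0_compat; auto)).
  pose proof (rp_pos y (-al)).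
  assert (1 - al * (x / y - 1) <= exp (- al * (ln x - ln y))) by nra.
  assert (Rpower y (- al) - al * (Rpower y (- al) / y) * (x - y) = Rpower y (-al) * (1 - al * (x / y - 1))) by (field; lra).
  rewrite H3. apply Rmult_le_compat_l; lra.
Qed.

Lemma rp_anti c x y : c <= 0 -> 0 < x <= y -> Rpower y c <= Rpower x c.
Proof.
  intros Hc [Hx Hxy]. unfold Rpower. apply exp_mono.
  pose proof (ln_le x y Hx Hxy). nra.
Qed.

Lemma poly_is p0 p1 p2 : is_RInt (fun x => p0 + p1 * x + p2 * x^2) 0 1 (p0 + p1/2 + p2/3).
Proof.
  assert (H := is_RInt_derive (fun x => p0 * x + p1 * x^2/2 + p2 * x^3/3) (fun x => p0 + p1 * x + p2 * x^2) 0 1).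
  replace (p0 + p1/2 + p2/3) with (minus ((fun x => p0 * x + p1 * x^2/2 + p2 * x^3/3) 1) ((fun x => p0 * x + p1 * x^2/2 + p2 * x^3/3) 0)).
  apply H.
  - intros x _. auto_derive. exact I. field.
  - intros x _. apply (@ex_derive_continuous R_AbsRing R_NormedModule). auto_derive. exact I.
  - simpl. unfold minus, plus, opp; simpl. field.
Qed.

Lemma lin_is (G : R -> R) I0 I1 u v p0 p1 p2 :
  is_RInt G 0 1 I0 -> is_RInt (fun x => x * G x) 0 1 I1 ->
  is_RInt (fun x => u * G x + v * (x * G x) + (p0 + p1 * x + p2 * x^2)) 0 1
          (u * I0 + v * I1 + (p0 + p1/2 + p2/3)).
Proof.
  intros H0 H1.
  apply (is_RInt_plus (V:=R_NormedModule)); [apply (is_RInt_plus (V:=R_NormedModule))|].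
  - apply (is_RInt_scal (V:=R_NormedModule)); exact H0.
  - apply (is_RInt_scal (V:=R_NormedModule)); exact H1.
  - apply poly_is.
Qed.

Section Bounds.
Variables (g dg : R -> R) (I0 I1 : R).
Hypothesis H0 : is_RInt g 0 1 I0.
Hypothesis H1 : is_RInt (fun x => x * g x) 0 1 I1.
Hypothesis Htan : forall x y, 0 <= x <= 1 -> 0 <= y <= 1 -> g y + dg y * (x - y) <= g x.
Hypothesis Hmon : forall x y, 0 <= x -> x <= y -> y <= 1 -> dg x <= dg y.

Lemma bound_a : dg 0 / 6 <= 2 * I1 - I0.
Proof.
  pose (d := dg 0). pose (m := g (1/2)).
  assert (A := lin_is g I0 I1 0 0 (d/2) (-2*d) (2*d) H0 H1).
  assert (B := lin_is g I0 I1 (-1) 2 m (-2*m) 0 H0 H1).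
  assert (L := is_RInt_le _ _ 0 1 _ _ ltac:(lra) A B).
  replace (dg 0 / 6) with (0 * I0 + 0 * I1 + (d / 2 + -2 * d / 2 + 2 * d / 3)) by (unfold d; field).
  replace (2 * I1 - I0) with (-1 * I0 + 2 * I1 + (m + -2 * m / 2 + 0 / 3)) by field.
  apply L. intros x Hx.
  assert (Hd : 0 <= d \/ True) by (right; exact I).
  destruct (Rle_dec (1/2) x) as [Hl|Hl].
  - pose proof (Htan x (1/2) ltac:(lra) ltac:(lra)).
    pose proof (Hmon 0 (1/2) ltac:(lra) ltac:(lra) ltac:(lra)).
    fold m in H. fold d in H2.
    assert (dg (1/2) * (x - 1/2) >= d * (x - 1/2)) by nra.
    assert ((2*x-1) * (g x - m) >= (2*x-1) * (d * (x-1/2))) by nra.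
    nra.
  - pose proof (Htan (1/2) x ltac:(lra) ltac:(lra)).
    pose proof (Hmon 0 x ltac:(lra) ltac:(lra) ltac:(lra)).
    fold m in H. fold d in H2.
    assert (dg x * (1/2 - x) >= d * (1/2 - x)) by nra.
    assert ((1 - 2*x) * (m - g x) >= (1-2*x) * (d * (1/2 - x))) by nra.
    nra.
Qed.

Lemma bound_b : dg 0 / 2 <= g 1 - I0.
Proof.
  pose (d := dg 0). pose (m := g 1).
  assert (A := lin_is g I0 I1 0 0 d (-d) 0 H0 H1).
  assert (B := lin_is g I0 I1 (-1) 0 m 0 0 H0 H1).
  assert (L := is_RInt_le _ _ 0 1 _ _ ltac:(lra) A B).
  replace (dg 0 / 2) with (0 * I0 + 0 * I1 + (d + - d / 2 + 0 / 3)) by (unfold d; field).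
  replace (g 1 - I0) with (-1 * I0 + 0 * I1 + (m + 0 / 2 + 0 / 3)) by (unfold m; field).
  apply L. intros x Hx.
  pose proof (Htan 1 x ltac:(lra) ltac:(lra)).
  pose proof (Hmon 0 x ltac:(lra) ltac:(lra) ltac:(lra)).
  fold m in H. fold d in H2.
  assert (dg x * (1 - x) >= d * (1 - x)) by nra.
  nra.
Qed.

Lemma bound_c : 2 * I1 - I0 <= dg 1 / 6.
Proof.
  pose (d := dg 1). pose (m := g (1/2)).
  assert (A := lin_is g I0 I1 0 0 (d/2) (-2*d) (2*d) H0 H1).
  assert (B := lin_is g I0 I1 (-1) 2 m (-2*m) 0 H0 H1).
  assert (L := is_RInt_le _ _ 0 1 _ _ ltac:(lra) B A).
  replace (dg 1 / 6) with (0 * I0 + 0 * I1 + (d / 2 + -2 * d / 2 + 2 * d / 3)) by (unfold d; field).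
  replace (2 * I1 - I0) with (-1 * I0 + 2 * I1 + (m + -2 * m / 2 + 0 / 3)) by field.
  apply L. intros x Hx.
  destruct (Rle_dec (1/2) x) as [Hl|Hl].
  - pose proof (Htan (1/2) x ltac:(lra) ltac:(lra)).
    pose proof (Hmon x 1 ltac:(lra) ltac:(lra) ltac:(lra)).
    fold m in H. fold d in H2.
    assert (dg x * (x - 1/2) <= d * (x - 1/2)) by nra.
    assert ((2*x-1) * (g x - m) <= (2*x-1) * (d * (x-1/2))) by nra.
    nra.
  - pose proof (Htan x (1/2) ltac:(lra) ltac:(lra)).
    pose proof (Hmon (1/2) 1 ltac:(lra) ltac:(lra) ltac:(lra)).
    fold m in H. fold d in H2.
    assert (dg (1/2) * (1/2 - x) <= d * (1/2 - x)) by nra.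
    assert ((1 - 2*x) * (m - g x) <= (1-2*x) * (d * (1/2 - x))) by nra.
    nra.
Qed.
End Bounds.

Lemma cont_poly (p : R -> R) x : ex_derive p x -> continuous p x.
Proof. intros H. apply (@ex_derive_continuous R_AbsRing R_NormedModule). exact H. Qed.

Lemma cont_prp (p : R -> R) B h c x : continuous p x -> 0 < B - x * h ->
  continuous (fun y => p y * Rpower (B - y * h) c) x.
Proof.
  intros Hp Hb. apply (continuous_mult (K:=R_AbsRing)); auto. apply rp_cont; auto.
Qed.

Section G.
Variables (al B h : R).
Hypothesis Hal : 0 < al < 1.
Hypothesis Hh : 0 < h.
Hypothesis HB : 0 < B - h.

Let g x := Rpower (B - x * h) (-al).
Let dg x := al * h * Rpower (B - x * h) (-al - 1).

Lemma base_pos x : 0 <= x <= 1 -> 0 < B - x * h.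
Proof. intros. nra. Qed.

Definition gI0 := RInt (fun x => Rpower (B - x * h) (-al)) 0 1.
Definition gI1 := RInt (fun x => x * Rpower (B - x * h) (-al)) 0 1.

Lemma gI0_is : is_RInt (fun x => Rpower (B - x * h) (-al)) 0 1 gI0.
Proof.
  apply (RInt_correct (V:=R_CompleteNormedModule)). apply (ex_RInt_continuous (V:=R_CompleteNormedModule)).
  intros z Hz. rewrite Rmin_left in Hz by lra. rewrite Rmax_right in Hz by lra.
  apply rp_cont. apply base_pos; lra.
Qed.

Lemma gI1_is : is_RInt (fun x => x * Rpower (B - x * h) (-al)) 0 1 gI1.
Proof.
  apply (RInt_correct (V:=R_CompleteNormedModule)). apply (ex_RInt_continuous (V:=R_CompleteNormedModule)).
  intros z Hz. rewrite Rmin_left in Hz by lra. rewrite Rmax_right in Hz by lra.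
  apply (cont_prp (fun y => y)). apply continuous_id. apply base_pos; lra.
Qed.

Lemma g_tan : forall x y, 0 <= x <= 1 -> 0 <= y <= 1 -> g y + dg y * (x - y) <= g x.
Proof.
  intros x y Hx Hy. unfold g, dg.
  pose proof (rp_tan al (B - x*h) (B - y*h) ltac:(lra) (base_pos x Hx) (base_pos y Hy)).
  replace (Rpower (B - y * h) (- al) + al * h * Rpower (B - y * h) (- al - 1) * (x - y))
    with (Rpower (B - y * h) (- al) - al * Rpower (B - y * h) (- al - 1) * (B - x * h - (B - y * h))) by ring.
  exact H.
Qed.

Lemma g_mon : forall x y, 0 <= x -> x <= y -> y <= 1 -> dg x <= dg y.
Proof.
  intros x y H1 H2 H3. unfold dg.
  pose proof (rp_anti (-al-1) (B - y*h) (B - x*h) ltac:(lra) ltac:(split; [apply base_pos; lra| nra])).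
  assert (0 < al * h) by nra. nra.
Qed.

Lemma gb_a : dg 0 / 6 <= 2 * gI1 - gI0.
Proof. exact (bound_a g dg gI0 gI1 gI0_is gI1_is g_tan g_mon). Qed.
Lemma gb_b : dg 0 / 2 <= g 1 - gI0.
Proof. exact (bound_b g dg gI0 gI1 gI0_is gI1_is g_tan g_mon). Qed.
Lemma gb_c : 2 * gI1 - gI0 <= dg 1 / 6.
Proof. exact (bound_c g dg gI0 gI1 gI0_is gI1_is g_tan g_mon). Qed.

Lemma gb_d : 0 <= gI1 /\ gI1 <= gI0.
Proof.
  assert (Z := lin_is g gI0 gI1 0 0 0 0 0 gI0_is gI1_is).
  assert (A := lin_is g gI0 gI1 0 1 0 0 0 gI0_is gI1_is).
  assert (Bq := lin_is g gI0 gI1 1 (-1) 0 0 0 gI0_is gI1_is).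
  split.
  - pose proof (is_RInt_le _ _ 0 1 _ _ ltac:(lra) Z A). 
    assert (0 * gI0 + 0 * gI1 + (0 + 0/2 + 0/3) <= 0 * gI0 + 1 * gI1 + (0 + 0/2 + 0/3)).
    { apply H. intros x Hx. unfold g. pose proof (rp_pos (B - x * h) (-al)). nra. }
    lra.
  - pose proof (is_RInt_le _ _ 0 1 _ _ ltac:(lra) Z Bq). 
    assert (0 * gI0 + 0 * gI1 + (0 + 0/2 + 0/3) <= 1 * gI0 + -1 * gI1 + (0 + 0/2 + 0/3)).
    { apply H. intros x Hx. unfold g. pose proof (rp_pos (B - x * h) (-al)). nra. }
    lra.
Qed.

End G.

Section G2.
Variables (al B h : R).
Hypothesis Hal : 0 < al < 1.
Hypothesis Hh : 0 < h.
Hypothesis HB : 0 < B - h.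

Lemma bpos x : 0 <= x <= 1 -> 0 < B - x * h.
Proof. intros. nra. Qed.

Lemma gI0_val : gI0 al B h = (Rpower B (1-al) - Rpower (B - h) (1-al)) / ((1-al)*h).
Proof.
  set (F := fun x => (- / ((1-al)*h)) * Rpower (B - x * h) (1-al)).
  assert (D : forall x, Rmin 0 1 <= x <= Rmax 0 1 -> is_derive F x (Rpower (B - x * h) (-al))).
  { intros x Hx. rewrite Rmin_left in Hx by lra. rewrite Rmax_right in Hx by lra.
    unfold F. pose proof (is_derive_scal _ x (- / ((1-al)*h)) _ (rp_der B h (1-al) x (bpos x Hx))).
    replace (Rpower (B - x * h) (- al)) with (- / ((1 - al) * h) * ((1 - al) * Rpower (B - x * h) (1 - al - 1) * - h)).
    exact H. replace (1 - al - 1) with (-al) by ring. field. split; lra. }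
  assert (C : forall x, Rmin 0 1 <= x <= Rmax 0 1 -> continuous (fun x => Rpower (B - x * h) (-al)) x).
  { intros x Hx. rewrite Rmin_left in Hx by lra. rewrite Rmax_right in Hx by lra. apply rp_cont, bpos; lra. }
  pose proof (is_RInt_derive F _ 0 1 D C) as I.
  unfold gI0. rewrite (is_RInt_unique _ _ _ _ I).
  unfold F, minus, plus, opp; simpl.
  replace (B - 1 * h) with (B - h) by ring. replace (B - 0 * h) with B by ring.
  field. split; lra.
Qed.

Lemma gR_val h' : 0 < h' ->
  RInt (fun s => (h + h' - s * h) * (1 - s) * Rpower (B - s * h) (-al - 1)) 0 1
  = ((2*h+h') * gI0 al B h - 2*h * gI1 al B h - (h+h') * Rpower B (-al)) / (al*h).
Proof.
  intros Hh'.
  set (H := fun x => (-((1-x)*(h*(1-x)+h'))) * Rpower (B - x * h) (-al)).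
  set (dH := fun x => (2*h*(1-x)+h') * Rpower (B - x * h) (-al)
                     - (al*h*((1-x)*(h*(1-x)+h'))) * Rpower (B - x * h) (-al-1)).
  assert (D : forall x, Rmin 0 1 <= x <= Rmax 0 1 -> is_derive H x (dH x)).
  { intros x Hx. rewrite Rmin_left in Hx by lra. rewrite Rmax_right in Hx by lra.
    assert (P : is_derive (fun x => (-((1-x)*(h*(1-x)+h')))) x (2*h*(1-x)+h')).
    { auto_derive. exact I. ring. }
    pose proof (is_derive_mult _ _ x _ _ P (rp_der B h (-al) x (bpos x Hx)) ltac:(intros; apply Rmult_comm)) as M.
    unfold H, dH. simpl in M.
    match type of M with is_derive _ _ ?l => replace (_ - _) with l end.
    exact M. unfold plus, mult; simpl. match goal with |- ?a = ?b => change (@eq R a b) end. generalize (Rpower (B - x*h) (-al)) (Rpower (B - x*h) (-al-1)). intros. ring. }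
  assert (C : forall x, Rmin 0 1 <= x <= Rmax 0 1 -> continuous dH x).
  { intros x Hx. rewrite Rmin_left in Hx by lra. rewrite Rmax_right in Hx by lra. unfold dH.
    apply (continuous_minus (V:=R_NormedModule)); apply cont_prp; try (apply bpos; lra);
    apply cont_poly; auto_derive; exact I. }
  pose proof (is_RInt_derive H dH 0 1 D C) as I.
  pose proof (lin_is (fun x => Rpower (B - x * h) (-al)) _ _ (2*h+h') (-2*h) 0 0 0 (gI0_is al B h Hh HB) (gI1_is al B h Hh HB)) as L.
  pose proof (is_RInt_minus _ _ _ _ _ _ L I) as M.
  pose proof (is_RInt_scal _ _ _ (/(al*h)) _ M) as S.
  apply is_RInt_unique.
  eapply is_RInt_ext; [| match type of S with is_RInt _ _ _ ?v => replace (_ / _) with v; [exact S|] end].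
  - intros x Hx. rewrite Rmin_left in Hx by lra. rewrite Rmax_right in Hx by lra.
    unfold dH, scal, minus, plus, opp, mult; simpl. unfold mult; simpl.
    rewrite (rp_m1 (B - x * h) (-al)) by (apply bpos; lra).
    pose proof (bpos x ltac:(lra)). field. repeat split; lra.
  - unfold H, scal, minus, plus, opp, mult; simpl. unfold mult; simpl.
    replace (B - 1 * h) with (B - h) by ring. replace (B - 0 * h) with B by ring.
    field. lra.
Qed.
End G2.

Lemma ballR x e y : ball x e y <-> Rabs (y - x) < e.
Proof. unfold ball; simpl; unfold AbsRing_ball, abs, minus, plus, opp; simpl. tauto. Qed.

Lemma gen_ftc (f F : R -> R) a b L : a < b ->
  (forall x, a <= x < b -> is_derive F x (f x)) ->
  (forall x, a <= x < b -> continuous f x) ->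
  filterlim F (at_left b) (locally L) ->
  is_RInt_gen f (at_point a) (at_left b) (L - F a).
Proof.
  intros Hab HD HC HL.
  unfold is_RInt_gen, filterlimi, filter_le, filtermapi.
  intros P [eps HP].
  rewrite filterlim_locally in HL. specialize (HL eps).
  destruct HL as [d Hd].
  apply Filter_prod with (Q := fun x => x = a) (R := fun x => a < x < b /\ ball L eps (F x)).
  - reflexivity.
  - assert (Hp : 0 < Rmin d (b - a)) by (apply Rmin_pos; [apply cond_pos| lra]).
    exists (mkposreal _ Hp). intros y Hy Hyb. simpl in Hy. rewrite ballR in Hy.
    pose proof (Rmin_r d (b-a)). pose proof (Rmin_l d (b-a)).
    split. split; [apply Rabs_lt_between in Hy; lra| exact Hyb].
    apply Hd; auto. rewrite ballR. lra.
  - intros x y -> [[Hay Hyb] Hball]. simpl.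
    exists (minus (F y) (F a)). split.
    + apply (is_RInt_derive (V:=R_CompleteNormedModule)).
      * intros z Hz. rewrite Rmin_left in Hz by lra. rewrite Rmax_right in Hz by lra. apply HD; lra.
      * intros z Hz. rewrite Rmin_left in Hz by lra. rewrite Rmax_right in Hz by lra. apply HC; lra.
    + apply HP. rewrite ballR. rewrite ballR in Hball.
      unfold minus, plus, opp; simpl. replace (F y + - F a - (L - F a)) with (F y - L) by ring. exact Hball.
Qed.

Lemma left_le b : filter_le (at_left b) (locally b).
Proof. intros P [e He]. exists e. intros y Hy _. apply He; exact Hy. Qed.

Section Imp.
Variables (al T : R).
Hypothesis Hal : 0 < al < 1.

Let F := fun s => - Rpower (T - s * 1) (1 - al) / (1 - al).

Lemma F_der x : x < T -> is_derive F x (Rpower (T - x) (-al)).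
Proof.
  intros Hx. unfold F.
  pose proof (is_derive_scal _ x (- / (1 - al)) _ (rp_der T 1 (1-al) x ltac:(lra))) as H.
  eapply is_derive_ext; [| match type of H with is_derive _ _ ?l => replace (Rpower (T - x) (-al)) with l; [exact H|] end].
  - intros t0. simpl. field. lra.
  - replace (1 - al - 1) with (-al) by ring. replace (T - x * 1) with (T - x) by ring. field. lra.
Qed.

Lemma imp_cont x : x < T -> continuous (fun s => Rpower (T - s) (-al)) x.
Proof.
  intros Hx. pose proof (rp_cont T 1 (-al) x ltac:(lra)).
  eapply (continuous_ext (fun s => Rpower (T - s * 1) (-al))); [| exact H].
  intros; simpl; f_equal; ring.
Qed.

Lemma imp_lt a b : a < b -> b < T ->
  is_RInt_gen (fun s => Rpower (T - s) (-al)) (at_point a) (at_left b)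
     ((Rpower (T - a) (1 - al) - Rpower (T - b) (1 - al)) / (1 - al)).
Proof.
  intros Hab HbT.
  replace ((Rpower (T - a) (1 - al) - Rpower (T - b) (1 - al)) / (1 - al)) with (F b - F a).
  apply gen_ftc; auto.
  - intros x Hx. apply F_der; lra.
  - intros x Hx. apply imp_cont; lra.
  - eapply filterlim_filter_le_1. apply left_le.
    apply (@ex_derive_continuous R_AbsRing R_NormedModule). eexists. apply F_der; lra.
  - unfold F. replace (T - a * 1) with (T - a) by ring. replace (T - b * 1) with (T - b) by ring. field. lra.
Qed.

Lemma rp_small c eps : 0 < c -> 0 < eps -> exists d, 0 < d /\ forall z, 0 < z < d -> Rpower z c < eps.
Proof.
  intros Hc He. exists (exp (ln eps / c)). split. apply exp_pos.
  intros z [Hz Hzd]. unfold Rpower.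
  rewrite <- (exp_ln eps He). apply exp_increasing.
  assert (ln z < ln eps / c). { rewrite <- (ln_exp (ln eps / c)). apply ln_increasing; auto. }
  apply (Rmult_lt_compat_l c) in H; auto. replace (c * (ln eps / c)) with (ln eps) in H by (field; lra). lra.
Qed.

Lemma imp_T a : a < T ->
  is_RInt_gen (fun s => Rpower (T - s) (-al)) (at_point a) (at_left T)
     (Rpower (T - a) (1 - al) / (1 - al)).
Proof.
  intros Ha.
  replace (Rpower (T - a) (1 - al) / (1 - al)) with (0 - F a).
  apply gen_ftc; auto.
  - intros x Hx. apply F_der; lra.
  - intros x Hx. apply imp_cont; lra.
  - apply filterlim_locally. intros eps.
    destruct (rp_small (1 - al) (eps * (1 - al)) ltac:(lra) ltac:(pose proof (cond_pos eps); nra)) as [d [Hd Hz]].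
    exists (mkposreal d Hd). intros y Hy Hyt. simpl in Hy. rewrite ballR in Hy. rewrite ballR.
    apply Rabs_lt_between in Hy.
    specialize (Hz (T - y * 1) ltac:(lra)). unfold F.
    pose proof (rp_pos (T - y * 1) (1 - al)).
    rewrite Rabs_left1. 
    + apply (Rmult_lt_reg_r (1 - al)). lra. replace (- (- Rpower (T - y * 1) (1 - al) / (1 - al) - 0) * (1 - al)) with (Rpower (T - y * 1) (1 - al)) by (field; lra). exact Hz.
    + assert (0 <= Rpower (T - y * 1) (1 - al) / (1 - al)) by (apply Rdiv_le_0_compat; lra). lra.
  - unfold F. replace (T - a * 1) with (T - a) by ring. field. lra.
Qed.
End Imp.

Lemma tmono (t : nat -> R) : (forall n, t n < t (S n)) -> forall m n, (m <= n)%nat -> t m <= t n.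
Proof.
  intros Ht m n Hmn. induction Hmn. lra. specialize (Ht m0). lra.
Qed.

Lemma tau_pos t i : (forall n, t n < t (S n)) -> (1 <= i)%nat -> 0 < tau t i.
Proof.
  intros Ht Hi. unfold tau. destruct i. lia. replace (S i - 1)%nat with i by lia. specialize (Ht i). lra.
Qed.

Lemma sig_bounds al : 0 < al < 1 -> 1/2 < sig al < 1.
Proof. unfold sig. lra. Qed.

Lemma T_gt t al k i : 0 < al < 1 -> (forall n, t n < t (S n)) -> (1 <= k)%nat -> (i <= k - 1)%nat ->
  t i < tstar al t k.
Proof.
  intros Hal Ht Hk Hi. unfold tstar. pose proof (tmono t Ht i (k-1) Hi).
  pose proof (tau_pos t k Ht Hk). pose proof (sig_bounds al Hal). nra.
Qed.

Lemma pack al t k i : 0 < al < 1 -> (forall n, t n < t (S n)) -> (1 <= i)%nat -> (i <= k - 1)%nat ->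
 exists I0 I1,
 acoef al t k i = -(2*tau t i*(I0-I1) + tau t (i+1) * I0)/(tau t i + tau t (i+1)) /\
 ccoef al t k i = tau t i^2 * (2*I1 - I0)/(tau t (i+1) * (tau t i + tau t (i+1))) /\
 al * tau t i * Rpower (tstar al t k - t (i-1)%nat) (-al-1) / 6 <= 2*I1 - I0 /\
 al * tau t i * Rpower (tstar al t k - t (i-1)%nat) (-al-1) / 2 <= Rpower (tstar al t k - t i) (-al) - I0 /\
 2*I1 - I0 <= al * tau t i * Rpower (tstar al t k - t i) (-al-1) / 6 /\
 0 <= I1 <= I0 /\
 I0 = (Rpower (tstar al t k - t (i-1)%nat) (1-al) - Rpower (tstar al t k - t i) (1-al))/((1-al)*tau t i) /\
 RInt (fun s => (tau t i + tau t (i+1)%nat - s*tau t i) * (1 - s) * Rpower (tstar al t k - t (i-1)%nat - s * tau t i) (-al-1)) 0 1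
   = ((2*tau t i + tau t (i+1))*I0 - 2*tau t i*I1 - (tau t i + tau t (i+1)) * Rpower (tstar al t k - t (i-1)%nat) (-al)) / (al * tau t i).
Proof.
  intros Hal Ht Hi Hik.
  set (T := tstar al t k). set (B := T - t (i-1)%nat). set (h := tau t i). set (h' := tau t (i+1)%nat).
  assert (Hh : 0 < h) by (apply tau_pos; auto).
  assert (Hh' : 0 < h') by (apply tau_pos; auto; lia).
  assert (HTi : t i < T) by (apply T_gt; auto; lia).
  assert (EBh : B - h = T - t i) by (unfold B, h, tau; ring).
  assert (HB : 0 < B - h) by lra.
  exists (gI0 al B h), (gI1 al B h).
  pose proof (gb_a al B h Hal Hh HB) as Ga.
  pose proof (gb_b al B h Hal Hh HB) as Gb.
  pose proof (gb_c al B h Hal Hh HB) as Gc.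
  pose proof (gb_d al B h Hh HB) as Gd.
  cbv beta in Ga, Gb, Gc. replace (B - 0 * h) with B in Ga, Gb by ring.
  replace (B - 1 * h) with (T - t i) in Gb, Gc by lra.
  assert (Hbx : forall x, 0 <= x <= 1 -> 0 < B - x * h) by (intros; nra).
  split; [| split; [| split; [exact Ga | split; [exact Gb | split; [exact Gc | split; [exact Gd | split]]]]]].
  - unfold acoef. fold T. fold B. fold h. fold h'.
    apply is_RInt_unique.
    pose proof (lin_is (fun x => Rpower (B - x * h) (-al)) _ _ (-(2*h+h')/(h+h')) (2*h/(h+h')) 0 0 0 (gI0_is al B h Hh HB) (gI1_is al B h Hh HB)) as L.
    eapply is_RInt_ext; [| match type of L with is_RInt _ _ _ ?v => replace (_ / _) with v; [exact L|] end].
    + intros x Hx. rewrite Rmin_left in Hx by lra. rewrite Rmax_right in Hx by lra.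
      cbv beta. match goal with |- ?a = ?b => change (@eq R a b) end. rewrite Rpower_Ropp. pose proof (rp_pos (B - x * h) al). field. repeat split; lra.
    + field. lra.
  - unfold ccoef. fold T. fold B. fold h. fold h'.
    apply is_RInt_unique.
    pose proof (lin_is (fun x => Rpower (B - x * h) (-al)) _ _ (-(h^2)/(h'*(h+h'))) (2*h^2/(h'*(h+h'))) 0 0 0 (gI0_is al B h Hh HB) (gI1_is al B h Hh HB)) as L.
    eapply is_RInt_ext; [| match type of L with is_RInt _ _ _ ?v => replace (_ / _) with v; [exact L|] end].
    + intros x Hx. rewrite Rmin_left in Hx by lra. rewrite Rmax_right in Hx by lra.
      cbv beta. match goal with |- ?a = ?b => change (@eq R a b) end. rewrite Rpower_Ropp. pose proof (rp_pos (B - x * h) al). field. repeat split; lra.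
    + field. lra.
  - rewrite (gI0_val al B h Hal Hh HB). rewrite EBh. reflexivity.
  - fold T. fold B. fold h. fold h'. apply (gR_val al B h Hal Hh HB h' Hh').
Qed.

Lemma key_real r s eta : 0 < r -> 0 < s -> 0 < eta -> 1 - 3 * eta ^ 2 * (1 + eta) = 0 ->
  (r < eta -> s <= r ^ 2 * (1 + r) / (1 - 3 * r ^ 2 * (1 + r))) ->
  r / s + 3 * r - 1 / (r * (1 + r)) >= 0.
Proof.
  intros Hr Hs He Heta Hc.
  assert (Hr1 : 0 < r * (1 + r)) by nra.
  destruct (Rlt_le_dec r eta) as [Hlt|Hge].
  - specialize (Hc Hlt).
    assert (HD : 0 < 1 - 3 * r ^ 2 * (1 + r)).
    { assert (3 * r ^ 2 * (1 + r) < 3 * eta ^ 2 * (1 + eta)).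
      { assert (r^2 < eta^2) by nra. assert (r^2 * (1+r) < eta^2*(1+eta)) by nra. lra. }
      lra. }
    set (D := 1 - 3 * r ^ 2 * (1 + r)) in *.
    assert (HsD : s * D <= r ^ 2 * (1 + r)).
    { apply (Rmult_le_compat_r D) in Hc; [|lra]. unfold Rdiv in Hc. rewrite Rmult_assoc, Rinv_l in Hc by lra. lra. }
    assert (r / s >= D / (r * (1 + r))).
    { apply Rle_ge. apply (Rmult_le_reg_r (s * (r * (1 + r)))). nra.
      replace (D / (r * (1 + r)) * (s * (r * (1 + r)))) with (s * D) by (field; lra).
      replace (r / s * (s * (r * (1 + r)))) with (r ^ 2 * (1 + r)) by (field; lra). lra. }
    assert (D / (r * (1 + r)) + 3 * r - 1 / (r * (1 + r)) = 0) by (unfold D; field; lra).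
    lra.
  - assert (3 * r ^ 2 * (1 + r) >= 1).
    { assert (eta^2 <= r^2) by nra. assert (eta^2 * (1+eta) <= r^2*(1+r)) by nra. lra. }
    assert (3 * r - 1 / (r * (1 + r)) >= 0).
    { replace (3 * r - 1 / (r * (1 + r))) with ((3 * r ^ 2 * (1 + r) - 1) / (r * (1 + r))) by (field; lra).
      apply Rle_ge, Rdiv_le_0_compat; lra. }
    assert (0 < r / s) by (apply Rdiv_lt_0_compat; lra). lra.
Qed.

Lemma asm hm h hp I0 I1 Im0 Im1 W Y al :
  0 < hm -> 0 < h -> 0 < hp -> 0 < al -> 0 < Y ->
  al * h * Y / 6 <= 2 * I1 - I0 -> al * h * Y / 2 <= W - I0 -> 2 * Im1 - Im0 <= al * hm * Y / 6 ->
  (h / hm) / (hp / h) + 3 * (h / hm) - 1 / ((h / hm) * (1 + h / hm)) >= 0 ->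
  h ^ 2 * (2 * I1 - I0) / (hp * (h + hp)) + (-(2*h*(I0-I1) + hp * I0)/(h + hp)) + W
   - hm ^ 2 * (2 * Im1 - Im0) / (h * (hm + h)) >= 0.
Proof.
  intros Hhm Hh Hhp Hal HY HP HQ HPm HK.
  set (P := 2 * I1 - I0) in *. set (Pm := 2 * Im1 - Im0) in *.
  assert (E : h ^ 2 * P / (hp * (h + hp)) + (-(2*h*(I0-I1) + hp * I0)/(h + hp)) = P * h / hp - I0)
    by (unfold P; field; lra).
  rewrite E.
  assert (E2 : P * h / hp >= al * h * Y / 6 * h / hp).
  { apply Rle_ge. unfold Rdiv. apply Rmult_le_compat_r. left; apply Rinv_0_lt_compat; lra.
    apply Rmult_le_compat_r; lra. }
  assert (E3 : hm ^ 2 * Pm / (h * (hm + h)) <= hm ^ 2 * (al * hm * Y / 6) / (h * (hm + h))).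
  { unfold Rdiv. apply Rmult_le_compat_r. left; apply Rinv_0_lt_compat; nra.
    apply Rmult_le_compat_l; nra. }
  assert (E4 : al * h * Y / 6 * h / hp + al * h * Y / 2 - hm ^ 2 * (al * hm * Y / 6) / (h * (hm + h))
     = al * Y * hm / 6 * ((h / hm) / (hp / h) + 3 * (h / hm) - 1 / ((h / hm) * (1 + h / hm)))).
  { field. repeat split; lra. }
  assert (0 <= al * Y * hm / 6) by (assert (0 < al*Y*hm) by (apply Rmult_lt_0_compat; [apply Rmult_lt_0_compat|]; lra); lra).
  assert (0 <= al * Y * hm / 6 * ((h / hm) / (hp / h) + 3 * (h / hm) - 1 / ((h / hm) * (1 + h / hm)))) by nra.
  lra.
Qed.

Lemma asm3 hm h hp I0 I1 Im0 Im1 W Y al :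
  0 < hm -> 0 < h -> 0 < hp -> 0 < al < 1 -> 0 < Y ->
  al * h * Y / 6 <= 2 * I1 - I0 -> al * h * Y / 2 <= W - I0 -> 2 * Im1 - Im0 <= al * hm * Y / 6 ->
  3 * (h / hm) - 1 / ((h / hm) * (1 + h / hm)) >= 0 ->
  h ^ 2 * (2 * I1 - I0) / (hp * (h + hp)) + (-(2*h*(I0-I1) + hp * I0)/(h + hp)) + W
   - hm ^ 2 * (2 * Im1 - Im0) / (h * (hm + h)) - al / (2 - al) * (h ^ 2 * (2 * I1 - I0) / (hp * (h + hp))) >= 0.
Proof.
  intros Hhm Hh Hhp Hal HY HP HQ HPm HK.
  set (P := 2 * I1 - I0) in *. set (Pm := 2 * Im1 - Im0) in *.
  assert (E : h ^ 2 * P / (hp * (h + hp)) + (-(2*h*(I0-I1) + hp * I0)/(h + hp)) = P * h / hp - I0)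
    by (unfold P; field; lra).
  rewrite E.
  assert (HP0 : 0 <= P) by (assert (0 < al*h*Y) by (apply Rmult_lt_0_compat; [apply Rmult_lt_0_compat|]; lra); lra).
  assert (E1 : al / (2 - al) * (h ^ 2 * P / (hp * (h + hp))) <= P * h / hp).
  { replace (al / (2 - al) * (h ^ 2 * P / (hp * (h + hp)))) with ((al / (2 - al)) * (h / (h + hp)) * (P * h / hp)) by (field; lra).
    assert (0 <= P * h / hp) by (apply Rdiv_le_0_compat; [apply Rmult_le_pos; lra | lra]).
    assert (al / (2 - al) <= 1) by (apply (Rdiv_le_1 al (2 - al)); lra).
    assert (0 <= al / (2 - al)) by (apply Rdiv_le_0_compat; lra).
    assert (h / (h + hp) <= 1) by (apply (Rdiv_le_1 h (h+hp)); lra).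
    assert (0 <= h / (h + hp)) by (apply Rdiv_le_0_compat; lra).
    assert (al / (2 - al) * (h / (h + hp)) <= 1) by nra. nra. }
  assert (E3 : hm ^ 2 * Pm / (h * (hm + h)) <= hm ^ 2 * (al * hm * Y / 6) / (h * (hm + h))).
  { unfold Rdiv. apply Rmult_le_compat_r. left; apply Rinv_0_lt_compat; nra.
    apply Rmult_le_compat_l; nra. }
  assert (E4 : al * h * Y / 2 - hm ^ 2 * (al * hm * Y / 6) / (h * (hm + h))
     = al * Y * hm / 6 * (3 * (h / hm) - 1 / ((h / hm) * (1 + h / hm)))).
  { field. repeat split; lra. }
  assert (0 <= al * Y * hm / 6) by (assert (0 < al*Y*hm) by (apply Rmult_lt_0_compat; [apply Rmult_lt_0_compat|]; lra); lra).
  assert (0 <= al * Y * hm / 6 * (3 * (h / hm) - 1 / ((h / hm) * (1 + h / hm)))) by nra.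
  lra.
Qed.

Lemma asm1 h hp I0 I1 W Y al :
  0 < h -> 0 < hp -> 0 < al < 1 -> 0 < Y ->
  al * h * Y / 6 <= 2 * I1 - I0 -> al * h * Y / 2 <= W - I0 ->
  h ^ 2 * (2 * I1 - I0) / (hp * (h + hp)) + (-(2*h*(I0-I1) + hp * I0)/(h + hp)) + W
   - al / (2 - al) * (h ^ 2 * (2 * I1 - I0) / (hp * (h + hp))) >= 0 /\
  h ^ 2 * (2 * I1 - I0) / (hp * (h + hp)) + (-(2*h*(I0-I1) + hp * I0)/(h + hp)) + W >= 0.
Proof.
  intros Hh Hhp Hal HY HP HQ.
  set (P := 2 * I1 - I0) in *.
  assert (E : h ^ 2 * P / (hp * (h + hp)) + (-(2*h*(I0-I1) + hp * I0)/(h + hp)) = P * h / hp - I0)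
    by (unfold P; field; lra).
  rewrite E.
  assert (HP0 : 0 <= P) by (assert (0 < al*h*Y) by (apply Rmult_lt_0_compat; [apply Rmult_lt_0_compat|]; lra); lra).
  assert (HQ0 : 0 <= al * h * Y / 2) by (assert (0 < al*h*Y) by (apply Rmult_lt_0_compat; [apply Rmult_lt_0_compat|]; lra); lra).
  assert (E1 : al / (2 - al) * (h ^ 2 * P / (hp * (h + hp))) <= P * h / hp).
  { replace (al / (2 - al) * (h ^ 2 * P / (hp * (h + hp)))) with ((al / (2 - al)) * (h / (h + hp)) * (P * h / hp)) by (field; lra).
    assert (0 <= P * h / hp) by (apply Rdiv_le_0_compat; [apply Rmult_le_pos; lra | lra]).
    assert (al / (2 - al) <= 1) by (apply (Rdiv_le_1 al (2 - al)); lra).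
    assert (0 <= al / (2 - al)) by (apply Rdiv_le_0_compat; lra).
    assert (h / (h + hp) <= 1) by (apply (Rdiv_le_1 h (h+hp)); lra).
    assert (0 <= h / (h + hp)) by (apply Rdiv_le_0_compat; lra).
    assert (al / (2 - al) * (h / (h + hp)) <= 1) by nra. nra. }
  assert (0 <= P * h / hp) by (apply Rdiv_le_0_compat; [apply Rmult_le_pos; lra | lra]).
  split; lra.
Qed.

Section Ctx.
Variables (al : R) (t : nat -> R).
Hypothesis Hal : 0 < al < 1.
Hypothesis Ht : forall n, t n < t (S n).

Lemma Me11 : Mentry al t 1 1 = diag_term al t 1.
Proof. reflexivity. Qed.

Lemma Mekk k : (2 <= k)%nat -> Mentry al t k k = ccoef al t k (k - 1) + diag_term al t k.
Proof.
  intros Hk. unfold Mentry.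
  rewrite (proj2 (Nat.leb_le 1 k)) by lia. rewrite Nat.leb_refl, Nat.eqb_refl.
  rewrite (proj2 (Nat.eqb_neq k 1)) by lia. reflexivity.
Qed.

Lemma Mek1 k : (2 <= k)%nat -> Mentry al t k 1 = - acoef al t k 1.
Proof.
  intros Hk. unfold Mentry.
  rewrite (proj2 (Nat.leb_le 1 k)) by lia.
  rewrite (proj2 (Nat.eqb_neq 1 k)) by lia. reflexivity.
Qed.

Lemma Memid k j : (2 <= j)%nat -> (j < k)%nat -> Mentry al t k j = ccoef al t k (j - 1) - acoef al t k j.
Proof.
  intros Hj Hk. unfold Mentry.
  rewrite (proj2 (Nat.leb_le 1 j)) by lia. rewrite (proj2 (Nat.leb_le j k)) by lia.
  rewrite (proj2 (Nat.eqb_neq j k)) by lia. rewrite (proj2 (Nat.eqb_neq j 1)) by lia. reflexivity.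
Qed.

Lemma diag_facts k : (1 <= k)%nat ->
  let Q := Rpower (sig al * tau t k) al in
  0 < Q /\ diag_term al t k = sig al / ((1 - al) * Q) /\
  Rpower (tstar al t k - t (k - 1)%nat) (-al) = / Q /\
  Rpower (tstar al t k - t (k - 1)%nat) (1 - al) = sig al * tau t k / Q.
Proof.
  intros Hk Q.
  pose proof (tau_pos t k Ht Hk) as Htau. pose proof (sig_bounds al Hal) as Hs.
  assert (ET : tstar al t k - t (k - 1)%nat = sig al * tau t k) by (unfold tstar; ring).
  assert (HQ : 0 < Q) by apply rp_pos.
  assert (EQ : Q = Rpower (sig al) al * Rpower (tau t k) al) by (unfold Q; rewrite Rpower_mult_distr; auto; lra).
  pose proof (rp_pos (sig al) al). pose proof (rp_pos (tau t k) al).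
  split; [exact HQ|]. split; [|split].
  - unfold diag_term. replace (1 - al) with (1 + - al) by ring. rewrite Rpower_plus, Rpower_1, Rpower_Ropp by lra.
    rewrite EQ. field. repeat split; lra.
  - rewrite ET, Rpower_Ropp. reflexivity.
  - rewrite ET. replace (1 - al) with (1 + - al) by ring. rewrite Rpower_plus, Rpower_1, Rpower_Ropp.
    fold Q. field. lra. nra.
Qed.

Lemma ccoef_nonneg k i : (1 <= i)%nat -> (i <= k - 1)%nat -> 0 <= ccoef al t k i.
Proof.
  intros Hi Hik.
  destruct (pack al t k i Hal Ht Hi Hik) as [I0 [I1 [Ea [Ec [Pa _]]]]].
  rewrite Ec. pose proof (tau_pos t i Ht Hi). pose proof (tau_pos t (i+1) Ht ltac:(lia)).
  pose proof (rp_pos (tstar al t k - t (i - 1)%nat) (- al - 1)).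
  assert (0 < al * tau t i * Rpower (tstar al t k - t (i - 1)%nat) (- al - 1)) by
    (apply Rmult_lt_0_compat; [apply Rmult_lt_0_compat|]; lra).
  apply Rdiv_le_0_compat. apply Rmult_le_pos. nra. lra. nra.
Qed.

Variables (rs eta : R).
Hypothesis Hrs : 0 < rs.
Hypothesis Heta : 0 < eta.
Hypothesis Heq : 1 - 3 * eta ^ 2 * (1 + eta) = 0.
Hypothesis Hmesh : forall k : nat, (2 <= k)%nat ->
     rs < rho t k /\ rs < rho t (S k) /\
     (rho t k < eta ->
      rho t (S k) <= rho t k ^ 2 * (1 + rho t k) / (1 - 3 * rho t k ^ 2 * (1 + rho t k))).

Lemma KEY k i : (2 <= i)%nat -> (i <= k - 1)%nat ->
  ccoef al t k i + acoef al t k i + Rpower (tstar al t k - t i) (-al) - ccoef al t k (i - 1) >= 0.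
Proof.
  intros Hi Hik.
  destruct (pack al t k i Hal Ht ltac:(lia) Hik) as [I0 [I1 [Ea [Ec [Pa [Pb [Pc _]]]]]]].
  destruct (pack al t k (i-1) Hal Ht ltac:(lia) ltac:(lia)) as [J0 [J1 [Fa [Fc [Qa [Qb [Qc _]]]]]]].
  replace (i - 1 + 1)%nat with i in Fc by lia.
  rewrite Nat.add_1_r in Ea, Ec.
  destruct (Hmesh i Hi) as [R1 [R2 R3]].
  unfold rho in R1, R2, R3. replace (S i - 1)%nat with i in R2, R3 by lia.
  pose proof (tau_pos t i Ht ltac:(lia)). pose proof (tau_pos t (i-1) Ht ltac:(lia)).
  pose proof (tau_pos t (S i) Ht ltac:(lia)).
  assert (K := key_real (tau t i / tau t (i - 1)) (tau t (S i) / tau t i) eta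
     ltac:(apply Rdiv_lt_0_compat; lra) ltac:(apply Rdiv_lt_0_compat; lra) Heta Heq R3).
  rewrite Ec, Ea, Fc.
  apply (asm _ _ _ _ _ _ _ _ (Rpower (tstar al t k - t (i - 1)%nat) (- al - 1)) al); first [lra | apply rp_pos | assumption].
Qed.

Lemma KEY3 k i : (2 <= i)%nat -> (i <= k - 1)%nat -> rho t i >= eta ->
  ccoef al t k i + acoef al t k i + Rpower (tstar al t k - t i) (-al) - ccoef al t k (i - 1)
   - al / (2 - al) * ccoef al t k i >= 0.
Proof.
  intros Hi Hik Hr.
  destruct (pack al t k i Hal Ht ltac:(lia) Hik) as [I0 [I1 [Ea [Ec [Pa [Pb [Pc _]]]]]]].
  destruct (pack al t k (i-1) Hal Ht ltac:(lia) ltac:(lia)) as [J0 [J1 [Fa [Fc [Qa [Qb [Qc _]]]]]]].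
  replace (i - 1 + 1)%nat with i in Fc by lia.
  unfold rho in Hr.
  pose proof (tau_pos t i Ht ltac:(lia)). pose proof (tau_pos t (i-1) Ht ltac:(lia)).
  pose proof (tau_pos t (i+1) Ht ltac:(lia)).
  set (r := tau t i / tau t (i - 1)) in *.
  assert (Hr0 : 0 < r) by (apply Rdiv_lt_0_compat; lra).
  assert (K : 3 * r - 1 / (r * (1 + r)) >= 0).
  { assert (3 * r ^ 2 * (1 + r) >= 1).
    { assert (eta^2 <= r^2) by nra. assert (eta^2 * (1+eta) <= r^2*(1+r)) by nra. lra. }
    replace (3 * r - 1 / (r * (1 + r))) with ((3 * r ^ 2 * (1 + r) - 1) / (r * (1 + r))) by (field; lra).
    apply Rle_ge, Rdiv_le_0_compat; nra. }
  rewrite Ec, Ea, Fc.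
  apply (asm3 _ _ _ _ _ _ _ _ (Rpower (tstar al t k - t (i - 1)%nat) (- al - 1)) al); first [lra | apply rp_pos | assumption].
Qed.

Lemma X1 k : (2 <= k)%nat ->
  ccoef al t k 1 + acoef al t k 1 + Rpower (tstar al t k - t 1%nat) (-al) - al / (2 - al) * ccoef al t k 1 >= 0 /\
  ccoef al t k 1 + acoef al t k 1 + Rpower (tstar al t k - t 1%nat) (-al) >= 0.
Proof.
  intros Hk.
  destruct (pack al t k 1 Hal Ht ltac:(lia) ltac:(lia)) as [I0 [I1 [Ea [Ec [Pa [Pb [Pc _]]]]]]].
  pose proof (tau_pos t 1 Ht ltac:(lia)). pose proof (tau_pos t (1+1) Ht ltac:(lia)).
  rewrite Ec, Ea.
  apply (asm1 _ _ _ _ _ (Rpower (tstar al t k - t (1 - 1)%nat) (- al - 1)) al); first [lra | apply rp_pos | assumption].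
Qed.

End Ctx.
Lemma negA_bound h h' I0 I1 rs : 0 < h -> 0 < h' -> 0 < rs -> rs < h' / h -> 0 <= I1 <= I0 ->
  - (-(2*h*(I0-I1) + h' * I0)/(h + h')) >= rs / (1 + rs) * I0.
Proof.
  intros Hh Hh' Hrs Hr HI.
  assert (rs * h < h') by (apply (Rmult_lt_compat_r h) in Hr; [|lra]; unfold Rdiv in Hr; rewrite Rmult_assoc, Rinv_l in Hr; lra).
  replace (- (-(2*h*(I0-I1) + h' * I0)/(h + h'))) with ((2*h*(I0-I1) + h' * I0)/(h + h')) by (field; lra).
  apply Rle_ge. apply (Rmult_le_reg_r ((h + h') * (1 + rs))). nra.
  replace (rs / (1 + rs) * I0 * ((h + h') * (1 + rs))) with (rs * (h + h') * I0) by (field; lra).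
  replace ((2 * h * (I0 - I1) + h' * I0) / (h + h') * ((h + h') * (1 + rs))) with ((2 * h * (I0 - I1) + h' * I0) * (1 + rs)) by (field; lra).
  assert (0 <= h*(I0-I1)*(1+rs)) by (apply Rmult_le_pos; [apply Rmult_le_pos|]; lra).
  assert (0 <= I0*(h' - rs*h)) by (apply Rmult_le_pos; lra).
  nra.
Qed.


Theorem lemma2 (alpha : R) (t : nat -> R) (rs eta : R) :
  0 < alpha < 1 ->
  (* rho_* : the unique positive root of rho(1+rho) = 1 - 3 rho^2 (1+rho) *)
  0 < rs -> rs * (1 + rs) = 1 - 3 * rs ^ 2 * (1 + rs) ->
  (* eta : the unique positive root of 1 - 3 rho^2 (1+rho) = 0 *)
  0 < eta -> 1 - 3 * eta ^ 2 * (1 + eta) = 0 ->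
  t 0%nat = 0 ->
  (forall n : nat, t n < t (S n)) ->
  (forall k : nat, (2 <= k)%nat ->
     rs < rho t k /\ rs < rho t (S k) /\
     (rho t k < eta ->
      rho t (S k) <= rho t k ^ 2 * (1 + rho t k) / (1 - 3 * rho t k ^ 2 * (1 + rho t k)))) ->
  (* Q1 *)
  (forall k j : nat, (1 <= j)%nat -> (j <= k)%nat ->
     Mentry alpha t k j >=
     rs / ((1 + rs) * tau t j) *
     RInt_gen (fun s => Rpower (tstar alpha t k - s) (- alpha))
       (at_point (t (j - 1)%nat)) (at_left (Rmin (t j) (tstar alpha t k)))) /\
  (* Q2, first part *)
  (forall k j : nat, (2 <= j)%nat -> (j <= k - 1)%nat ->
     Mentry alpha t k j - Mentry alpha t k (j - 1)%nat >=
     alpha * tau t j / (tau t j + tau t (j + 1)%nat) *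
     RInt (fun s => (tau t j + tau t (j + 1)%nat - s * tau t j) * (1 - s) *
                    Rpower (tstar alpha t k - t (j - 1)%nat - s * tau t j) (- alpha - 1))
       0 1) /\
  (* Q2, second part *)
  (forall k : nat, (2 <= k)%nat ->
     Mentry alpha t k k - Mentry alpha t k (k - 1)%nat >=
     alpha / (2 * (1 - alpha) * Rpower (sig alpha * tau t k) alpha)) /\
  (* Q3 *)
  ((forall k : nat, (2 <= k)%nat -> rho t k >= eta) ->
   forall k : nat, (2 <= k)%nat ->
     (1 - alpha) / sig alpha * Mentry alpha t k k - Mentry alpha t k (k - 1)%nat >= 0).
Proof.
  intros Hal Hrs Hrseq Heta Heq Ht0 Ht Hmesh.
  pose proof (sig_bounds alpha Hal) as Hsig.
  split; [|split; [|split]].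
  -
    intros k j Hj Hjk.
    destruct (Nat.eq_dec j k) as [<-|Hne].
    + pose proof (tau_pos t j Ht Hj) as Htau.
      assert (HT : tstar alpha t j < t j) by (unfold tstar, tau in *; nra).
      assert (HT2 : t (j - 1)%nat < tstar alpha t j).
      { unfold tstar. nra. }
      rewrite Rmin_right by lra.
      rewrite (is_RInt_gen_unique _ _ (imp_T alpha (tstar alpha t j) Hal (t (j-1)%nat) HT2)).
      destruct (diag_facts alpha t Hal Ht j Hj) as [HQ [Ed [EW EW1]]].
      rewrite EW1.
      set (Q := Rpower (sig alpha * tau t j) alpha) in *.
      assert (Hd : 0 < diag_term alpha t j) by (rewrite Ed; apply Rdiv_lt_0_compat; nra).
      assert (ER : rs / ((1 + rs) * tau t j) * (sig alpha * tau t j / Q / (1 - alpha)) = rs / (1 + rs) * diag_term alpha t j)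
        by (rewrite Ed; field; repeat split; lra).
      rewrite ER.
      assert (rs / (1 + rs) < 1) by (apply (Rdiv_lt_1 rs (1 + rs)); lra).
      assert (0 < rs / (1 + rs)) by (apply Rdiv_lt_0_compat; lra).
      assert (rs / (1 + rs) * diag_term alpha t j <= diag_term alpha t j) by nra.
      destruct (Nat.eq_dec j 1) as [->|Hj1].
      * rewrite Me11. lra.
      * rewrite Mekk by lia. pose proof (ccoef_nonneg alpha t Hal Ht j (j - 1) ltac:(lia) ltac:(lia)). lra.
    + assert (Hjk' : (j <= k - 1)%nat) by lia.
      assert (HTj : t j < tstar alpha t k) by (apply T_gt; auto; lia).
      rewrite Rmin_left by lra.
      pose proof (tau_pos t j Ht Hj) as Htau.
      assert (Htj : t (j - 1)%nat < t j) by (unfold tau in Htau; lra).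
      rewrite (is_RInt_gen_unique _ _ (imp_lt alpha (tstar alpha t k) Hal _ _ Htj HTj)).
      destruct (pack alpha t k j Hal Ht Hj Hjk') as [I0 [I1 [Ea [Ec [Pa [Pb [Pc [Pd [Pv Pr]]]]]]]]].
      replace (rs / ((1 + rs) * tau t j) * ((Rpower (tstar alpha t k - t (j - 1)%nat) (1 - alpha) -
        Rpower (tstar alpha t k - t j) (1 - alpha)) / (1 - alpha))) with (rs / (1 + rs) * I0)
        by (rewrite Pv; field; repeat split; lra).
      pose proof (tau_pos t (j+1) Ht ltac:(lia)) as Htau'.
      assert (HI0 : 0 <= I0) by lra.
      destruct (Nat.eq_dec j 1) as [->|Hj1].
      * rewrite Mek1 by lia. rewrite Ea.
        destruct (Hmesh 2%nat ltac:(lia)) as [R1 _]. unfold rho in R1.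
        change (1 + 1)%nat with 2%nat. change (2 - 1)%nat with 1%nat in R1.
        apply negA_bound; auto.
      * rewrite Memid by lia. rewrite Ea.
        pose proof (ccoef_nonneg alpha t Hal Ht k (j - 1) ltac:(lia) ltac:(lia)).
        destruct (Hmesh j ltac:(lia)) as [_ [R2 _]]. unfold rho in R2.
        replace (S j - 1)%nat with j in R2 by lia. rewrite <- Nat.add_1_r in R2.
        pose proof (negA_bound (tau t j) (tau t (j + 1)) I0 I1 rs Htau Htau' Hrs R2 Pd). lra.
  -
    intros k j Hj Hjk.
    destruct (pack alpha t k j Hal Ht ltac:(lia) Hjk) as [I0 [I1 [Ea [Ec [Pa [Pb [Pc [Pd [Pv Pr]]]]]]]]].
    rewrite Pr. rewrite (Memid alpha t k j) by lia.
    pose proof (tau_pos t j Ht ltac:(lia)) as Htau. pose proof (tau_pos t (j+1) Ht ltac:(lia)) as Htau'.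
    replace (alpha * tau t j / (tau t j + tau t (j + 1)) *
      (((2 * tau t j + tau t (j + 1)) * I0 - 2 * tau t j * I1 -
       (tau t j + tau t (j + 1)) * Rpower (tstar alpha t k - t (j - 1)%nat) (- alpha)) / (alpha * tau t j)))
      with (- acoef alpha t k j - Rpower (tstar alpha t k - t (j - 1)%nat) (- alpha))
      by (rewrite Ea; field; repeat split; lra).
    destruct (Nat.eq_dec j 2) as [->|Hj2].
    + change (2 - 1)%nat with 1%nat. rewrite Mek1 by lia.
      destruct (X1 alpha t Hal Ht k ltac:(lia)) as [_ X]. lra.
    + rewrite (Memid alpha t k (j - 1)) by lia.
      pose proof (KEY alpha t Hal Ht rs eta Heta Heq Hmesh k (j - 1) ltac:(lia) ltac:(lia)). lra.
  -
    intros k Hk.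
    destruct (diag_facts alpha t Hal Ht k ltac:(lia)) as [HQ [Ed [EW EW1]]].
    rewrite Mekk by lia.
    assert (ED : diag_term alpha t k = Rpower (tstar alpha t k - t (k - 1)%nat) (- alpha) +
      alpha / (2 * (1 - alpha) * Rpower (sig alpha * tau t k) alpha)).
    { rewrite Ed, EW. unfold sig in *. field. repeat split; lra. }
    rewrite ED.
    destruct (Nat.eq_dec k 2) as [->|Hk2].
    + change (2 - 1)%nat with 1%nat. rewrite Mek1 by lia.
      destruct (X1 alpha t Hal Ht 2 ltac:(lia)) as [_ X]. lra.
    + rewrite (Memid alpha t k (k - 1)) by lia.
      pose proof (KEY alpha t Hal Ht rs eta Heta Heq Hmesh k (k - 1) ltac:(lia) ltac:(lia)). lra.
  -
    intros Hge k Hk.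
    destruct (diag_facts alpha t Hal Ht k ltac:(lia)) as [HQ [Ed [EW EW1]]].
    rewrite Mekk by lia.
    assert (ED : (1 - alpha) / sig alpha * (ccoef alpha t k (k - 1) + diag_term alpha t k) =
      ccoef alpha t k (k - 1) - alpha / (2 - alpha) * ccoef alpha t k (k - 1) +
      Rpower (tstar alpha t k - t (k - 1)%nat) (- alpha)).
    { rewrite Ed, EW. unfold sig in *. field. repeat split; lra. }
    rewrite ED.
    destruct (Nat.eq_dec k 2) as [->|Hk2].
    + change (2 - 1)%nat with 1%nat. rewrite Mek1 by lia.
      destruct (X1 alpha t Hal Ht 2 ltac:(lia)) as [X _]. lra.
    + rewrite (Memid alpha t k (k - 1)) by lia.
      pose proof (KEY3 alpha t Hal Ht eta Heta Heq k (k - 1) ltac:(lia) ltac:(lia) (Hge (k-1)%nat ltac:(lia))). lra.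
Qed.
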